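(* Let $[a,b]$ be an interval with $b-a=1$, let $\mu_0$ be a distribution and let $\mu_1$ be obtained from $\mu_0$ by the extreme move on $[a,b]$. Then $S[\mu_1]-S[\mu_0]\ge 3\,(M_2[\mu_1]-M_2[\mu_0])^2$.
   Context: A distribution is a finite set $\mu=\{(x_1,m_1),\dots,(x_k,m_k)\}$ with $x_i\in\mathbb R$ distinct and $m_i>0$; $\mu(A)=\sum_{x_i\in A}m_i$. Moments: $M_j[\mu]=\sum_i m_ix_i^j$. Spread: $S[\mu]=\sum_{i<j}|x_i-x_j|m_im_j$. The extreme move on $[a,b]$ applied to $\mu$ yields the unique distribution $\mu'$ with $\mu'\{a<x<b\}=0$, $\mu'(\{x\})=\mu(\{x\})$ for all $x\notin[a,b]$, $M_0[\mu']=M_0[\mu]$ and $M_1[\mu']=M_1[\mu]$ (i.e., all mass in $[a,b]$ is moved to the endpoints $a,b$ preserving total mass and center of mass). *)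

(* Defs.v *)
From Stdlib Require Import Reals Lra List.
Import ListNotations.
Open Scope R_scope.

(* A distribution: finite list of (point, mass) pairs. *)
Definition distrib := list (R * R).

Definition is_dist (mu : distrib) : Prop :=
  NoDup (map fst mu) /\ Forall (fun p => 0 < snd p) mu.

Fixpoint moment (j : nat) (mu : distrib) : R :=
  match mu with
  | [] => 0
  | (x, m) :: t => m * x ^ j + moment j t
  end.

Fixpoint spread_row (x m : R) (t : distrib) : R :=
  match t with
  | [] => 0
  | (y, n) :: t' => Rabs (x - y) * m * n + spread_row x m t'
  end.

Fixpoint spread (mu : distrib) : R :=
  match mu with
  | [] => 0
  | (x, m) :: t => spread_row x m t + spread t
  end.

Fixpoint mass_open (a b : R) (mu : distrib) : R :=
  match mu with
  | [] => 0
  | (x, m) :: t =>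
      (if Rlt_dec a x then if Rlt_dec x b then m else 0 else 0)
      + mass_open a b t
  end.

Fixpoint mass_pt (y : R) (mu : distrib) : R :=
  match mu with
  | [] => 0
  | (x, m) :: t => (if Req_EM_T x y then m else 0) + mass_pt y t
  end.

Definition extreme_move (a b : R) (mu mu' : distrib) : Prop :=
  is_dist mu' /\
  mass_open a b mu' = 0 /\
  (forall x, ~ (a <= x <= b) -> mass_pt x mu' = mass_pt x mu) /\
  moment 0 mu' = moment 0 mu /\
  moment 1 mu' = moment 1 mu.

(* Main.v *)
Require Import Defs.
From Stdlib Require Import Reals Lra List Permutation Sorted Psatz.
Import ListNotations.
Open Scope R_scope.

Lemma moment_app j l1 l2 : moment j (l1 ++ l2) = moment j l1 + moment j l2.
Proof. induction l1 as [|[x m] t IH]; simpl; [ring| rewrite IH; ring]. Qed.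

Lemma moment_perm j l1 l2 : Permutation l1 l2 -> moment j l1 = moment j l2.
Proof.
  induction 1; simpl; try destruct x; try destruct y; try lra.
Qed.

Lemma spread_row_app x m l1 l2 : spread_row x m (l1 ++ l2) = spread_row x m l1 + spread_row x m l2.
Proof. induction l1 as [|[y n] t IH]; simpl; [ring| rewrite IH; ring]. Qed.

Lemma spread_row_perm x m l1 l2 : Permutation l1 l2 -> spread_row x m l1 = spread_row x m l2.
Proof.
  induction 1; simpl; try destruct x0; try destruct y; try lra.
Qed.

Lemma spread_perm l1 l2 : Permutation l1 l2 -> spread l1 = spread l2.
Proof.
  induction 1.
  - reflexivity.
  - destruct x; simpl. rewrite IHPermutation, (spread_row_perm _ _ _ _ H). ring.
  - destruct x as [x m]; destruct y as [y n]; simpl.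
    rewrite (Rabs_minus_sym x y). ring.
  - lra.
Qed.

Fixpoint cross (l1 l2 : distrib) : R :=
  match l1 with [] => 0 | (x,m)::t => spread_row x m l2 + cross t l2 end.

Lemma spread_app l1 l2 : spread (l1 ++ l2) = spread l1 + spread l2 + cross l1 l2.
Proof.
  induction l1 as [|[x m] t IH]; simpl; [ring|]. rewrite IH, spread_row_app. ring.
Qed.

Lemma spread_row_ge x m t : Forall (fun q => x <= fst q) t ->
  spread_row x m t = m * (moment 1 t - x * moment 0 t).
Proof.
  induction t as [|[y n] t IH]; intros H; simpl; [ring|].
  inversion H; subst. simpl in *. rewrite IH by assumption.
  rewrite Rabs_left1 by lra. ring.
Qed.

Lemma spread_row_le x m t : Forall (fun q => fst q <= x) t ->
  spread_row x m t = m * (x * moment 0 t - moment 1 t).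
Proof.
  induction t as [|[y n] t IH]; intros H; simpl; [ring|].
  inversion H; subst. simpl in *. rewrite IH by assumption.
  rewrite Rabs_right by lra. ring.
Qed.

Definition Jf (lam u c : R) : R :=
  let al := c - lam in let be := 2 * lam in
  (al^2 + al*be + be^2/3) - (al^2*u + al*be*u^2 + be^2*u^3/3).

Fixpoint Rf (lam u c : R) (l : distrib) : R :=
  match l with
  | [] => Jf lam u c
  | (y,n)::t => Jf lam u c - Jf lam y c + Rf lam y (c - n) t
  end.

Lemma Jdiff lam u y c : u <= y -> 0 <= Jf lam u c - Jf lam y c.
Proof.
  intros H. unfold Jf.
  set (al := c - lam). set (be := 2*lam).
  replace (al ^ 2 + al * be + be ^ 2 / 3 - (al ^ 2 * u + al * be * u ^ 2 + be ^ 2 * u ^ 3 / 3) -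
  (al ^ 2 + al * be + be ^ 2 / 3 - (al ^ 2 * y + al * be * y ^ 2 + be ^ 2 * y ^ 3 / 3)))
  with ((y-u)*((al + be*(y+u)/2)^2 + be^2*(y-u)^2/12)) by field.
  apply Rmult_le_pos; [lra|].
  assert (0 <= (al + be*(y+u)/2)^2) by (apply pow2_ge_0).
  assert (0 <= be^2*(y-u)^2) by (apply Rmult_le_pos; apply pow2_ge_0).
  lra.
Qed.

Definition SS := StronglySorted (fun p q : R*R => fst p <= fst q).

Lemma Rf_nonneg lam l : forall u c, SS l -> Forall (fun p => u <= fst p <= 1) l -> u <= 1 ->
  0 <= Rf lam u c l.
Proof.
  induction l as [|[y n] t IH]; intros u c Hs Hf Hu; simpl.
  - replace (Jf lam u c) with (Jf lam u c - Jf lam 1 c) by (unfold Jf; field).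
    apply Jdiff; auto.
  - inversion Hf; subst. simpl in H1.
    apply StronglySorted_inv in Hs. destruct Hs as [Hs Hg].
    assert (0 <= Jf lam u c - Jf lam y c) by (apply Jdiff; lra).
    assert (0 <= Rf lam y (c - n) t).
    { apply IH; auto; try lra.
      rewrite Forall_forall in *. intros p Hp. split; [apply (Hg p Hp)| apply (H2 p Hp)]. }
    lra.
Qed.

Lemma Rf_closed lam l : forall u c, SS l ->
  Rf lam u c l = Jf lam u c - 2*(c*(moment 0 l - moment 1 l) + lam*(moment 1 l - moment 2 l))
     + moment 0 l * (moment 0 l - moment 1 l) - spread l.
Proof.
  induction l as [|[y n] t IH]; intros u c Hs; simpl.
  - ring.
  - apply StronglySorted_inv in Hs. destruct Hs as [Hs Hg].
    rewrite IH by auto. rewrite spread_row_ge.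
    2:{ rewrite Forall_forall in *. intros p Hp. apply (Hg p Hp). }
    unfold Jf. field.
Qed.

Lemma core_sorted l : SS l -> Forall (fun p => 0 <= fst p <= 1) l ->
  moment 1 l * (moment 0 l - moment 1 l) - spread l >= 3 * (moment 1 l - moment 2 l)^2.
Proof.
  intros Hs Hf.
  set (lam := 3 * (moment 1 l - moment 2 l)).
  pose proof (Rf_nonneg lam l 0 (moment 0 l - moment 1 l) Hs Hf ltac:(lra)) as H.
  rewrite Rf_closed in H by auto. unfold Jf in H.
  set (m := moment 0 l) in *. set (s := moment 1 l) in *. set (q := moment 2 l) in *.
  unfold lam in H.
  replace (3 * (s - q) ^ 2) with (3*(s-q)^2) by ring.
  nra.
Qed.

Fixpoint ins (p : R*R) (l : distrib) : distrib :=
  match l with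
  | [] => [p]
  | q::t => if Rle_dec (fst p) (fst q) then p::q::t else q :: ins p t
  end.
Fixpoint isort (l : distrib) : distrib :=
  match l with [] => [] | p::t => ins p (isort t) end.

Lemma ins_perm p l : Permutation (ins p l) (p::l).
Proof.
  induction l as [|q t IH]; simpl; [auto|].
  destruct Rle_dec; [auto|].
  eapply perm_trans; [apply perm_skip, IH| apply perm_swap].
Qed.

Lemma isort_perm l : Permutation (isort l) l.
Proof.
  induction l as [|p t IH]; simpl; [auto|].
  eapply perm_trans; [apply ins_perm| apply perm_skip, IH].
Qed.

Lemma ins_SS p l : SS l -> SS (ins p l).
Proof.
  induction l as [|q t IH]; intros H; simpl.
  - constructor; constructor.
  - apply StronglySorted_inv in H as [Hs Hg].
    destruct Rle_dec as [r|r].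
    + constructor; [constructor; auto|].
      constructor; auto. eapply Forall_impl; [|exact Hg]; simpl; intros; lra.
    + apply SSorted_cons; [apply IH; exact Hs|]. rewrite Forall_forall in Hg |- *. intros x Hx.
      apply (Permutation_in _ (ins_perm p t)) in Hx. destruct Hx as [<-|Hx]; [lra| auto].
Qed.

Lemma isort_SS l : SS (isort l).
Proof. induction l; simpl; [constructor| apply ins_SS; auto]. Qed.

Definition shift (a : R) (l : distrib) : distrib := map (fun p => (fst p - a, snd p)) l.

Lemma shift_m0 a l : moment 0 (shift a l) = moment 0 l.
Proof. induction l as [|[x m] t IH]; simpl; [ring| rewrite IH; ring]. Qed.
Lemma shift_m1 a l : moment 1 (shift a l) = moment 1 l - a * moment 0 l.
Proof. induction l as [|[x m] t IH]; simpl; [ring| rewrite IH; ring]. Qed.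
Lemma shift_m2 a l : moment 2 (shift a l) = moment 2 l - 2*a*moment 1 l + a^2 * moment 0 l.
Proof. induction l as [|[x m] t IH]; simpl; [ring| rewrite IH; ring]. Qed.
Lemma shift_row a x m l : spread_row (x - a) m (shift a l) = spread_row x m l.
Proof. induction l as [|[y n] t IH]; simpl; [ring| rewrite IH].
  replace (x - a - (y - a)) with (x - y) by ring. ring. Qed.
Lemma shift_spread a l : spread (shift a l) = spread l.
Proof. induction l as [|[x m] t IH]; simpl; [ring| rewrite IH, shift_row; ring]. Qed.

Lemma core_gen a l : Forall (fun p => a <= fst p <= a + 1) l ->
  let m := moment 0 l in let s := moment 1 l in let q := moment 2 l in
  let Q := s - a * m in
  Q * (m - Q) - spread l >= 3 * (Q - (q - 2*a*s + a^2*m))^2.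
Proof.
  intros Hf m s q Q.
  pose proof (core_sorted (isort (shift a l)) (isort_SS _)) as H.
  rewrite (moment_perm 0 _ _ (isort_perm _)), (moment_perm 1 _ _ (isort_perm _)),
    (moment_perm 2 _ _ (isort_perm _)), (spread_perm _ _ (isort_perm _)) in H.
  rewrite shift_m0, shift_m1, shift_m2, shift_spread in H.
  apply H. rewrite Forall_forall in *. intros p Hp.
  apply (Permutation_in _ (isort_perm _)) in Hp. unfold shift in Hp.
  apply in_map_iff in Hp. destruct Hp as [x [<- Hx]]. simpl. specialize (Hf x Hx). lra.
Qed.

Definition inb (a b x : R) : bool :=
  if Rle_dec a x then if Rle_dec x b then true else false else false.

Lemma inb_true a b x : inb a b x = true <-> a <= x <= b.
Proof. unfold inb; destruct (Rle_dec a x); destruct (Rle_dec x b); split; intros; try lra; try discriminate; auto. Qed.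

Lemma perm_split (f : R*R -> bool) l : Permutation l (filter (fun p => negb (f p)) l ++ filter f l).
Proof.
  induction l as [|p t IH]; simpl; [auto|].
  destruct (f p); simpl.
  - eapply perm_trans; [apply perm_skip, IH| apply Permutation_middle].
  - apply perm_skip, IH.
Qed.

Lemma mass_pt_filter a b x l :
  mass_pt x (filter (fun p => negb (inb a b (fst p))) l) = if inb a b x then 0 else mass_pt x l.
Proof.
  induction l as [|[y m] t IH]; simpl; [destruct (inb a b x); auto|].
  destruct (inb a b y) eqn:Hy; simpl; rewrite IH;
  destruct (inb a b x) eqn:Hx; destruct (Req_EM_T y x); subst; try congruence; lra.
Qed.

Lemma mass_pt_notin x l : ~ In x (map fst l) -> mass_pt x l = 0.
Proof.
  induction l as [|[y m] t IH]; simpl; intros H; [auto|].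
  destruct Req_EM_T; [subst; tauto|]. rewrite IH by tauto. ring.
Qed.

Lemma mass_pt_app x l1 l2 : mass_pt x (l1 ++ l2) = mass_pt x l1 + mass_pt x l2.
Proof. induction l1 as [|[y m] t IH]; simpl; [ring| rewrite IH; ring]. Qed.

Lemma perm_of_mass l1 : forall l2,
  NoDup (map fst l1) -> NoDup (map fst l2) ->
  Forall (fun p => 0 < snd p) l1 -> Forall (fun p => 0 < snd p) l2 ->
  (forall x, mass_pt x l1 = mass_pt x l2) -> Permutation l1 l2.
Proof.
  induction l1 as [|[x m] t IH]; intros l2 N1 N2 F1 F2 Hm.
  - destruct l2 as [|[y n] t2]; [auto|].
    specialize (Hm y). simpl in Hm, N2. inversion N2; subst.
    rewrite mass_pt_notin in Hm by auto. inversion F2; subst; simpl in *.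
    destruct Req_EM_T; [lra| congruence].
  - simpl in N1. inversion N1; subst. inversion F1; subst. simpl in H3.
    assert (Hx : mass_pt x l2 = m).
    { rewrite <- Hm. simpl. destruct Req_EM_T; [|congruence].
      rewrite mass_pt_notin by auto. ring. }
    assert (Hin : In x (map fst l2)).
    { destruct (in_dec Req_EM_T x (map fst l2)) as [i|i]; auto.
      rewrite mass_pt_notin in Hx by auto. lra. }
    apply in_map_iff in Hin. destruct Hin as [[x' n] [Hx' Hin]]. simpl in Hx'. subst x'.
    apply in_split in Hin. destruct Hin as [la [lb ->]].
    rewrite map_app in N2. simpl in N2.
    pose proof (NoDup_remove_2 _ _ _ N2) as Nx.
    rewrite <- map_app in Nx.
    assert (n = m).
    { rewrite mass_pt_app in Hx. simpl in Hx. destruct Req_EM_T; [|congruence].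
      rewrite <- Hx. rewrite mass_pt_notin, mass_pt_notin; try ring;
      intro Hc; apply Nx; rewrite map_app; apply in_or_app; auto. }
    subst n.
    eapply perm_trans; [| apply Permutation_middle].
    apply perm_skip. apply IH; auto.
    + pose proof (NoDup_remove_1 _ _ _ N2). rewrite map_app; auto.
    + rewrite Forall_forall in F2 |- *. intros p Hp. apply F2.
      apply in_app_or in Hp. apply in_or_app. simpl. tauto.
    + intros z. specialize (Hm z). rewrite mass_pt_app in Hm |- *. simpl in Hm.
      destruct Req_EM_T; lra.
Qed.

Lemma nodup_filter f (l : distrib) : NoDup (map fst l) -> NoDup (map fst (filter f l)).
Proof.
  induction l as [|p t IH]; simpl; intros H; [auto|].
  inversion H; subst. destruct (f p); simpl; auto.
  constructor; auto. intro Hc. apply H2. apply in_map_iff in Hc.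
  destruct Hc as [q [Hq Hi]]. apply filter_In in Hi. apply in_map_iff. exists q; tauto.
Qed.

Lemma forall_filter (P : R*R -> Prop) f l : Forall P l -> Forall P (filter f l).
Proof.
  rewrite !Forall_forall. intros H x Hx. apply filter_In in Hx. apply H; tauto.
Qed.

Lemma mass_open_nonneg a b l : Forall (fun p => 0 < snd p) l -> 0 <= mass_open a b l.
Proof.
  induction l as [|[x m] t IH]; intros H; simpl; [lra|].
  inversion H; subst. simpl in *. specialize (IH H3).
  destruct Rlt_dec; [destruct Rlt_dec|]; lra.
Qed.

Lemma mass_open_zero a b l : Forall (fun p => 0 < snd p) l -> mass_open a b l = 0 ->
  forall p, In p l -> ~ (a < fst p < b).
Proof.
  induction l as [|[x m] t IH]; intros H Hz p Hp; simpl in *; [tauto|].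
  inversion H; subst. simpl in *. pose proof (mass_open_nonneg a b t H3).
  destruct Hp as [<-|Hp].
  - simpl. intros [h1 h2]. destruct Rlt_dec; [|tauto]. destruct Rlt_dec; [|tauto]. lra.
  - apply IH; auto. destruct Rlt_dec; [destruct Rlt_dec|]; lra.
Qed.

Lemma cross_eq a b O E I :
  Forall (fun p => ~ (a <= fst p <= b)) O ->
  Forall (fun p => a <= fst p <= b) E -> Forall (fun p => a <= fst p <= b) I ->
  moment 0 E = moment 0 I -> moment 1 E = moment 1 I ->
  cross O E = cross O I.
Proof.
  intros HO HE HI H0 H1.
  induction O as [|[x m] t IH]; simpl; [auto|].
  inversion HO as [|? ? Hx HO']; subst. simpl in Hx. rewrite IH by auto.
  destruct (Rlt_dec x a).
  - rewrite !spread_row_ge; [rewrite H0, H1; ring| |];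
    rewrite Forall_forall in *; intros p Hp; [specialize (HI p Hp)|specialize (HE p Hp)]; lra.
  - rewrite !spread_row_le; [rewrite H0, H1; ring| |];
    rewrite Forall_forall in *; intros p Hp; [specialize (HI p Hp)|specialize (HE p Hp)]; lra.
Qed.

Lemma E_form a E : Forall (fun p => fst p = a \/ fst p = a + 1) E ->
  spread E = (moment 0 E - (moment 1 E - a * moment 0 E)) * (moment 1 E - a * moment 0 E) /\
  moment 2 E = (moment 0 E - (moment 1 E - a * moment 0 E)) * a^2
               + (moment 1 E - a * moment 0 E) * (a+1)^2.
Proof.
  induction E as [|[x m] t IH]; intros H; simpl; [split; ring|].
  inversion H; subst. destruct (IH H3) as [IH1 IH2]. rewrite IH1, IH2.
  simpl in H2. destruct H2 as [->| ->].
  - rewrite spread_row_ge. split; ring.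
    rewrite Forall_forall in *; intros p Hp; specialize (H3 p Hp); lra.
  - rewrite spread_row_le. split; ring.
    rewrite Forall_forall in *; intros p Hp; specialize (H3 p Hp); lra.
Qed.

Theorem mainTheorem6 (a b : R) (mu0 mu1 : distrib) :
  b - a = 1 ->
  is_dist mu0 ->
  extreme_move a b mu0 mu1 ->
  spread mu1 - spread mu0 >= 3 * (moment 2 mu1 - moment 2 mu0) ^ 2.
Proof.
  intros Hab [N0 F0] [[N1 F1] [Hopen [Hpt [HM0 HM1]]]].
  set (g := fun p : R*R => inb a b (fst p)).
  set (O0 := filter (fun p => negb (g p)) mu0).
  set (O1 := filter (fun p => negb (g p)) mu1).
  set (I := filter g mu0). set (E := filter g mu1).
  assert (P0 : Permutation mu0 (O0 ++ I)) by apply perm_split.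
  assert (P1 : Permutation mu1 (O1 ++ E)) by apply perm_split.
  assert (PO : Permutation O1 O0).
  { apply perm_of_mass; try apply nodup_filter; try apply forall_filter; auto.
    intros x. unfold O0, O1, g. rewrite !mass_pt_filter.
    destruct (inb a b x) eqn:Hx; auto. apply Hpt. rewrite <- inb_true. congruence. }
  assert (P1' : Permutation mu1 (O0 ++ E)).
  { eapply perm_trans; [exact P1|]. apply Permutation_app_tail; auto. }
  assert (HOo : Forall (fun p => ~ (a <= fst p <= b)) O0).
  { rewrite Forall_forall. intros p Hp. unfold O0 in Hp. apply filter_In in Hp.
    destruct Hp as [_ Hp]. unfold g in Hp. rewrite <- inb_true.
    destruct (inb a b (fst p)); simpl in Hp; congruence. }
  assert (HI : Forall (fun p => a <= fst p <= b) I).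
  { rewrite Forall_forall. intros p Hp. unfold I in Hp. apply filter_In in Hp.
    apply inb_true. tauto. }
  assert (HE : Forall (fun p => a <= fst p <= b) E).
  { rewrite Forall_forall. intros p Hp. unfold E in Hp. apply filter_In in Hp.
    apply inb_true. tauto. }
  assert (HE2 : Forall (fun p => fst p = a \/ fst p = a + 1) E).
  { rewrite Forall_forall in HE |- *. intros p Hp. pose proof (HE p Hp).
    assert (~ (a < fst p < b)).
    { apply (mass_open_zero a b mu1); auto. unfold E in Hp. apply filter_In in Hp. tauto. }
    destruct (Req_EM_T (fst p) a); [left; auto| right; lra]. }
  rewrite (moment_perm 0 _ _ P0), (moment_perm 0 _ _ P1'), !moment_app in HM0.
  rewrite (moment_perm 1 _ _ P0), (moment_perm 1 _ _ P1'), !moment_app in HM1.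
  assert (E0 : moment 0 E = moment 0 I) by lra.
  assert (E1 : moment 1 E = moment 1 I) by lra.
  rewrite (spread_perm _ _ P0), (spread_perm _ _ P1'), !spread_app.
  rewrite (moment_perm 2 _ _ P0), (moment_perm 2 _ _ P1'), !moment_app.
  rewrite (cross_eq a b O0 E I) by auto.
  destruct (E_form a E HE2) as [S2 M2].
  rewrite S2, M2, E0, E1.
  assert (HI' : Forall (fun p => a <= fst p <= a + 1) I).
  { eapply Forall_impl; [|exact HI]. simpl. intros; lra. }
  pose proof (core_gen a I HI') as C. simpl in C.
  set (m := moment 0 I) in *. set (s := moment 1 I) in *. set (q := moment 2 I) in *.
  replace (moment 2 O0 + ((m - (s - a * m)) * a ^ 2 + (s - a * m) * (a + 1) ^ 2) -
     (moment 2 O0 + q)) with (s - a * m - (q - 2 * a * s + a ^ 2 * m)) by ring.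
  lra.
Qed.
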